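(* Let $(\rho_n)$, $(\tau_n)$ be sequences of positive functions on $\mathbb{R}^2$ with $\int_{\mathbb{R}^2}\rho_n dx=a>0$ and $\int_{\mathbb{R}^2}\tau_n dx=b>0$ for all $n$. Suppose $(B_1(\rho_n,\tau_n))$ is bounded. Then for every $\varepsilon>0$ there exists $\xi(\varepsilon)>0$ such that for all $r>\xi$ and all $n\in\mathbb{N}$, $$\sup_{x\in\mathbb{R}^2}\int_{B_r(x)}\rho_n(y)dy\ge a-\varepsilon\quad\text{and}\quad \sup_{x\in\mathbb{R}^2}\int_{B_r(x)}\tau_n(y)dy\ge b-\varepsilon.$$
   Context: $B_1(f,g):=\iint_{\mathbb{R}^2\times\mathbb{R}^2}\log(1+|x-y|)f(x)g(y)\,dx\,dy$ for nonnegative measurable $f,g$; $B_r(x)$ is the ball of radius $r$ centered at $x$. *)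

(* Defs.v *)
From HB Require Import structures.
From mathcomp Require Import all_boot all_order all_algebra.
From mathcomp Require Import all_classical all_reals all_analysis.
Set Implicit Arguments. Unset Strict Implicit. Unset Printing Implicit Defensive.
Import Order.TTheory GRing.Theory Num.Theory.
Import numFieldNormedType.Exports.
Local Open Scope classical_set_scope.
Local Open Scope ring_scope.

Definition leb2 (R : realType) :=
  ((@lebesgue_measure R) \x (@lebesgue_measure R))%E.

(* Euclidean distance on R^2 (NOT the max-norm of the product normed space). *)
Definition dist2 (R : realType) (x y : R * R) : R :=
  Num.sqrt ((x.1 - y.1) ^+ 2 + (x.2 - y.2) ^+ 2).

Definition eball2 (R : realType) (x : R * R) (r : R) : set (R * R) :=
  [set y | dist2 x y < r].

(* B_1(f,g) = \iint log(1+|x-y|) f(x) g(y) dx dy, as an iterated integral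
   (integrand nonnegative, so by Tonelli this equals the double integral). *)
Definition B1 (R : realType) (f g : R * R -> R) : \bar R :=
  (\int[@leb2 R]_x \int[@leb2 R]_y
     (ln (1 + dist2 x y) * f x * g y)%:E)%E.

(* Main.v *)
Require Import Defs.
From HB Require Import structures.
From mathcomp Require Import all_boot all_order all_algebra.
From mathcomp Require Import all_classical all_reals all_analysis.
From mathcomp Require Import measurable_realfun lra.
Import Order.TTheory GRing.Theory Num.Theory.
Import numFieldNormedType.Exports.
Local Open Scope classical_set_scope.
Local Open Scope ring_scope.

Lemma mono_int d (T : measurableType d) (R : realType) (mu : {measure set T -> \bar R})
  (D : set T) (f g : T -> \bar R) :
  (forall x, D x -> (0 <= f x)%E) -> (forall x, D x -> (f x <= g x)%E) ->
  (\int[mu]_(x in D) f x <= \int[mu]_(x in D) g x)%E.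
Proof.
move=> f0 fg.
have g0 : forall x, D x -> (0 <= g x)%E by move=> x Dx; exact: le_trans (f0 x Dx) (fg x Dx).
rewrite (ge0_integralE _ f0) (ge0_integralE _ g0).
apply: ereal_sup_le => _ [h hf <-]; exists h => //= x.
apply: le_trans (hf x) _; rewrite /patch; case: ifP => // /[!inE] Dx.
exact: fg.
Qed.

Lemma mdist (R : realType) (x : R * R) : measurable_fun setT (dist2 x).
Proof.
rewrite /dist2.
apply: (@measurableT_comp _ _ _ _ _ _ (@Num.sqrt R) setT
   (fun y : R * R => (x.1 - y.1) ^+ 2 + (x.2 - y.2) ^+ 2)).
  exact: continuous_measurable_fun (@sqrt_continuous R).
apply: (@measurable_funD _ _ _ setT (fun y : R * R => (x.1 - y.1) ^+ 2)
  (fun y : R * R => (x.2 - y.2) ^+ 2)).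
  apply: measurable_funX; apply: (@measurable_funB _ _ _ setT (cst x.1) fst).
    exact: measurable_cst.
  exact: measurable_fst.
apply: measurable_funX; apply: (@measurable_funB _ _ _ setT (cst x.2) snd).
  exact: measurable_cst.
exact: measurable_snd.
Qed.

Lemma mball (R : realType) (x : R * R) r : measurable (eball2 x r).
Proof.
have := @mdist R x measurableT _ (measurable_itv `]-oo, r[).
rewrite setTI; congr measurable; apply/seteqP; split => y /=;
  by rewrite in_itv /= .
Qed.


Lemma H1 (R : realType) (S : set (R * R)) (g : R * R -> R) (c : R)
  (F : R * R -> \bar R) :
  measurable S -> measurable_fun setT g -> (forall y, 0 <= g y) -> 0 <= c ->
  (forall y, (0 <= F y)%E) -> (forall y, S y -> ((c * g y)%:E <= F y)%E) ->
  (c%:E * \int[@leb2 R]_(y in S) (g y)%:E <= \int[@leb2 R]_y F y)%E.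
Proof.
move=> mS mg g0 c0 F0 FS.
rewrite -ge0_integralZl_EFin //; last 2 first.
- by move=> y _; rewrite lee_fin.
- by apply/measurable_EFinP; exact: measurable_funS mg.
rewrite integral_mkcond; apply: mono_int => y _.
  by rewrite /patch; case: ifP => // _; rewrite -EFinM lee_fin mulr_ge0.
rewrite /patch; case: ifP => [/[!inE] Sy|_]; last exact: F0.
by rewrite -EFinM; exact: FS.
Qed.

Lemma Hcompl (R : realType) (S : set (R * R)) (g : R * R -> R) (A dl : R) :
  measurable S -> measurable_fun setT g -> (forall y, 0 <= g y) ->
  (\int[@leb2 R]_y (g y)%:E = A%:E)%E ->
  (\int[@leb2 R]_(y in S) (g y)%:E < (A - dl)%:E)%E ->
  (dl%:E <= \int[@leb2 R]_(y in ~` S) (g y)%:E)%E.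
Proof.
move=> mS mg g0 gA gS.
have := @ge0_integral_setU _ _ _ (@leb2 R) _ _ mS (measurableC mS) (EFin \o g).
rewrite setUv => E.
have {}E := E (proj2 (measurable_EFinP _ _) mg).
rewrite leNgt; apply/negP => H.
have := lteD gS H; rewrite -EFinD subrK.
rewrite -E ?gA ?ltxx //.
  by move=> y _; rewrite lee_fin.
by apply/eqP; rewrite setICr.
Qed.


Lemma dist2_ge0 (R : realType) (x y : R * R) : 0 <= dist2 x y.
Proof. exact: sqrtr_ge0. Qed.

Lemma dist2_sym (R : realType) (x y : R * R) : dist2 x y = dist2 y x.
Proof. by rewrite /dist2 -(sqrrN (x.1 - _)) -(sqrrN (x.2 - _)) !opprB. Qed.

Lemma tri_aux (R : realType) (u1 u2 v1 v2 : R) :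
  Num.sqrt ((u1 + v1) ^+ 2 + (u2 + v2) ^+ 2) <=
  Num.sqrt (u1 ^+ 2 + u2 ^+ 2) + Num.sqrt (v1 ^+ 2 + v2 ^+ 2).
Proof.
set A := Num.sqrt (u1 ^+ 2 + u2 ^+ 2); set B := Num.sqrt (v1 ^+ 2 + v2 ^+ 2).
have A0 : 0 <= A by exact: sqrtr_ge0.
have B0 : 0 <= B by exact: sqrtr_ge0.
have AA : A ^+ 2 = u1 ^+ 2 + u2 ^+ 2 by rewrite sqr_sqrtr // addr_ge0 // sqr_ge0.
have BB : B ^+ 2 = v1 ^+ 2 + v2 ^+ 2 by rewrite sqr_sqrtr // addr_ge0 // sqr_ge0.
have key : (u1 * v1 + u2 * v2) ^+ 2 <= (A * B) ^+ 2.
  rewrite exprMn AA BB.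
  have : 0 <= (u1 * v2 - u2 * v1) ^+ 2 by exact: sqr_ge0.
  move=> h; nra.
have AB0 : 0 <= A * B by exact: mulr_ge0.
have uv : u1 * v1 + u2 * v2 <= A * B by nra.
rewrite -(ger0_norm (addr_ge0 A0 B0)) -sqrtr_sqr.
apply: ler_wsqrtr.
nra.
Qed.

Lemma dist2_tri (R : realType) (p m q : R * R) :
  dist2 p q <= dist2 p m + dist2 m q.
Proof.
rewrite /dist2.
have -> : p.1 - q.1 = (p.1 - m.1) + (m.1 - q.1) by rewrite addrA subrK.
have -> : p.2 - q.2 = (p.2 - m.2) + (m.2 - q.2) by rewrite addrA subrK.
exact: tri_aux.
Qed.


Lemma lnmono (R : realType) (u v : R) : 0 <= u -> u <= v -> ln (1 + u) <= ln (1 + v).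
Proof. by move=> u0 uv; rewrite ler_ln ?posrE; lra. Qed.

Lemma lnge0 (R : realType) (u : R) : 0 <= u -> 0 <= ln (1 + u).
Proof. by move=> u0; apply: ln_ge0; lra. Qed.

Lemma prod3_ge0 (R : realType) (u p q : R) : 0 <= u -> 0 < p -> 0 < q ->
  0 <= ln (1 + u) * p * q.
Proof. move=> u0 p0 q0; apply: mulr_ge0; last exact: ltW.
apply: mulr_ge0; [exact: lnge0|exact: ltW]. Qed.

Lemma tau_part (R : realType) (rho tau : R * R -> R) (a b M s dl : R) :
  0 <= s -> 0 <= dl ->
  measurable_fun setT rho -> measurable_fun setT tau ->
  (forall x, 0 < rho x) -> (forall x, 0 < tau x) ->
  (\int[@leb2 R]_x (rho x)%:E = a%:E)%E ->
  (\int[@leb2 R]_x (tau x)%:E = b%:E)%E ->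
  (B1 rho tau <= M%:E)%E -> M < ln (1 + s) * a * dl ->
  exists x, ((b - dl)%:E <= \int[@leb2 R]_(y in eball2 x s) (tau y)%:E)%E.
Proof.
move=> s0 dl0 mr mt r0 t0 ra tb BM Mlt.
apply: contrapT => H.
have H' x : (\int[@leb2 R]_(y in eball2 x s) (tau y)%:E < (b - dl)%:E)%E.
  by rewrite ltNge; apply/negP => h; apply: H; exists x.
have inner x : ((ln (1 + s) * dl * rho x)%:E <=
    \int[@leb2 R]_y (ln (1 + dist2 x y) * rho x * tau y)%:E)%E.
  have c0 : 0 <= ln (1 + s) * rho x by apply: mulr_ge0; [exact: lnge0|exact: ltW].
  have := @H1 R (~` eball2 x s) tau (ln (1 + s) * rho x)
     (fun y => (ln (1 + dist2 x y) * rho x * tau y)%:E)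
     (measurableC (mball _ x s)) mt (fun y => ltW (t0 y)) c0.
  have hF : forall y, (0 <= (ln (1 + dist2 x y) * rho x * tau y)%:E)%E.
    by move=> y; rewrite lee_fin prod3_ge0 ?dist2_ge0.
  move=> /(_ hF) /(_ _) h.
  apply: le_trans (h _); last first.
    move=> y /= /negP; rewrite -leNgt => sd; rewrite lee_fin.
    have := lnmono _ _ _ s0 sd; have := r0 x; have := t0 y => *.
    have : 0 <= rho x * tau y by rewrite mulr_ge0 ?ltW.
    nra.
  have hc := @Hcompl R _ _ _ _ (mball _ x s) mt (fun y => ltW (t0 y)) tb (H' x).
  rewrite mulrAC EFinM.
  by apply: lee_wpmul2l => //; rewrite lee_fin.
have := @H1 R setT rho (ln (1 + s) * dl)
  (fun x => (\int[@leb2 R]_y (ln (1 + dist2 x y) * rho x * tau y)%:E)%E)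
  measurableT mr (fun y => ltW (r0 y)) (mulr_ge0 (lnge0 _ _ s0) dl0).
move=> /(_ _) /(_ _) h.
have hF : forall x, (0 <= \int[@leb2 R]_y (ln (1 + dist2 x y) * rho x * tau y)%:E)%E.
  by move=> x; apply: integral_ge0 => y _; rewrite lee_fin prod3_ge0 ?dist2_ge0.
have := h hF (fun x _ => inner x).
rewrite ra -EFinM => /le_trans /(_ BM); rewrite lee_fin; lra.
Qed.

Lemma rho_part (R : realType) (rho tau : R * R -> R) (a b M r eps : R) (x0 : R * R) :
  0 < r -> 0 <= eps -> 0 <= b ->
  measurable_fun setT rho -> measurable_fun setT tau ->
  (forall x, 0 < rho x) -> (forall x, 0 < tau x) ->
  (\int[@leb2 R]_x (rho x)%:E = a%:E)%E ->
  ((b / 2)%:E <= \int[@leb2 R]_(y in eball2 x0 (r / 2)) (tau y)%:E)%E ->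
  (B1 rho tau <= M%:E)%E -> M < ln (1 + r / 2) * (b / 2) * eps ->
  ((a - eps)%:E <= \int[@leb2 R]_(y in eball2 x0 r) (rho y)%:E)%E.
Proof.
move=> r0' eps0 bb mr mt r0 t0 ra tb BM Mlt.
have s0 : 0 <= r / 2 by lra.
have b0 : 0 <= b / 2 by lra.
rewrite leNgt; apply/negP => H.
have hc := @Hcompl R _ _ _ _ (mball _ x0 r) mr (fun y => ltW (r0 y)) ra H.
have inner x : (~` eball2 x0 r) x -> ((ln (1 + r / 2) * (b / 2) * rho x)%:E <=
    \int[@leb2 R]_y (ln (1 + dist2 x y) * rho x * tau y)%:E)%E.
  move=> /= /negP; rewrite -leNgt => rx.
  have c0 : 0 <= ln (1 + r / 2) * rho x by apply: mulr_ge0; [exact: lnge0|exact: ltW].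
  have := @H1 R (eball2 x0 (r / 2)) tau (ln (1 + r / 2) * rho x)
     (fun y => (ln (1 + dist2 x y) * rho x * tau y)%:E)
     (mball _ x0 (r / 2)) mt (fun y => ltW (t0 y)) c0.
  have hF : forall y, (0 <= (ln (1 + dist2 x y) * rho x * tau y)%:E)%E.
    by move=> y; rewrite lee_fin prod3_ge0 ?dist2_ge0.
  move=> /(_ hF) /(_ _) h.
  apply: le_trans (h _); last first.
    move=> y /= yd; rewrite lee_fin.
    have tr := dist2_tri _ x0 y x; rewrite (dist2_sym _ y x) in tr; rewrite /eball2 /= in yd.
    have sd : r / 2 <= dist2 x y by lra.
    have := lnmono _ _ _ s0 sd; have := r0 x; have := t0 y => *.
    have : 0 <= rho x * tau y by rewrite mulr_ge0 ?ltW.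
    nra.
  rewrite mulrAC EFinM.
  by apply: lee_wpmul2l => //; rewrite lee_fin.
have := @H1 R (~` eball2 x0 r) rho (ln (1 + r / 2) * (b / 2))
  (fun x => (\int[@leb2 R]_y (ln (1 + dist2 x y) * rho x * tau y)%:E)%E)
  (measurableC (mball _ x0 r)) mr (fun y => ltW (r0 y)) (mulr_ge0 (lnge0 _ _ s0) b0).
move=> /(_ _) /(_ _) h.
have hF : forall x, (0 <= \int[@leb2 R]_y (ln (1 + dist2 x y) * rho x * tau y)%:E)%E.
  by move=> x; apply: integral_ge0 => y _; rewrite lee_fin prod3_ge0 ?dist2_ge0.
have := h hF inner.
move=> /le_trans /(_ BM) h2.
have c0' : (0 <= (ln (1 + r / 2) * (b / 2))%:E)%E.
  by rewrite lee_fin; apply: mulr_ge0 => //; exact: lnge0.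
have := le_trans (lee_wpmul2l c0' hc) h2.
rewrite -EFinM lee_fin.
lra.
Qed.


Theorem lemma3p2 (R : realType) (rho tau : nat -> R * R -> R) (a b : R) :
  0 < a -> 0 < b ->
  (forall n, measurable_fun setT (rho n)) ->
  (forall n, measurable_fun setT (tau n)) ->
  (forall n x, 0 < rho n x) ->
  (forall n x, 0 < tau n x) ->
  (forall n, (\int[@leb2 R]_x (rho n x)%:E = a%:E)%E) ->
  (forall n, (\int[@leb2 R]_x (tau n x)%:E = b%:E)%E) ->
  (exists M : R, forall n, (B1 (rho n) (tau n) <= M%:E)%E) ->
  forall eps : R, 0 < eps ->
  exists xi : R, 0 < xi /\
    forall r : R, xi < r -> forall n : nat,
      ((a - eps)%:E <= ereal_sup [set (\int[@leb2 R]_(y in eball2 x r) (rho n y)%:E)%E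
                                  | x in [set: R * R]])%E /\
      ((b - eps)%:E <= ereal_sup [set (\int[@leb2 R]_(y in eball2 x r) (tau n y)%:E)%E
                                  | x in [set: R * R]])%E.
Proof.
move=> a0 b0 mr mt r0 t0 ra tb [M BM] eps e0.
pose C := `|M| + 1.
have MC : M < C by have := ler_norm M; rewrite /C; lra.
have C0 : 0 < C by rewrite /C; have := normr_ge0 M; lra.
pose K := C / (a * eps) + C / (a * (b / 2)) + C / ((b / 2) * eps).
have Kbig p : 0 < p -> C / p <= K -> forall L, K < L -> M < L * p.
  move=> p0 hp L hL.
  have e1 : C / p * p = C by rewrite mulfVK // gt_eqF.
  have e2 : C / p * p <= K * p by rewrite ler_pM2r.
  have e3 : K * p < L * p by rewrite ltr_pM2r.
  lra.
have t1 : 0 <= C / (a * eps) by apply: divr_ge0; [lra|apply: mulr_ge0; lra].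
have t2 : 0 <= C / (a * (b / 2)) by apply: divr_ge0; [lra|apply: mulr_ge0; lra].
have t3 : 0 <= C / ((b / 2) * eps) by apply: divr_ge0; [lra|apply: mulr_ge0; lra].
have k1 : C / (a * eps) <= K by rewrite /K; lra.
have k2 : C / (a * (b / 2)) <= K by rewrite /K; lra.
have k3 : C / ((b / 2) * eps) <= K by rewrite /K; lra.
have eK := expR_gt0 K.
exists (2 * expR K); split; first lra.
move=> r rxi n.
have hL : K < ln (1 + r / 2).
  by rewrite -{1}(expRK K) ltr_ln ?posrE; lra.
have hL2 : ln (1 + r / 2) <= ln (1 + r) by apply: lnmono; lra.
split.
- have hM := Kbig (a * (b / 2)) ltac:(apply: mulr_gt0; lra) k2 _ hL.
  rewrite (mulrA (ln (1 + r / 2))) in hM.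
  have [x0 hx0] := @tau_part R (rho n) (tau n) a b M (r / 2) (b / 2)
    ltac:(lra) ltac:(lra) (mr n) (mt n) (r0 n) (t0 n) (ra n) (tb n) (BM n)
    hM.
  rewrite (_ : b - b / 2 = b / 2) in hx0; last lra.
  have hM2 := Kbig ((b / 2) * eps) ltac:(apply: mulr_gt0; lra) k3 _ hL.
  rewrite (mulrA (ln (1 + r / 2))) in hM2.
  have := @rho_part R (rho n) (tau n) a b M r eps x0 ltac:(lra) ltac:(lra)
    ltac:(lra) (mr n) (mt n) (r0 n) (t0 n) (ra n) hx0 (BM n)
    hM2.
  move=> h; apply: le_trans h _; apply: ereal_sup_ubound; by exists x0.
- have hM := Kbig (a * eps) ltac:(apply: mulr_gt0; lra) k1 (ln (1 + r)) ltac:(lra).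
  rewrite (mulrA (ln (1 + r))) in hM.
  have [x hx] := @tau_part R (rho n) (tau n) a b M r eps
    ltac:(lra) ltac:(lra) (mr n) (mt n) (r0 n) (t0 n) (ra n) (tb n) (BM n) hM.
  apply: le_trans hx _; apply: ereal_sup_ubound; by exists x.
Qed.
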